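(* When $\operatorname{char}(\Bbbk) = 0$, the linear map $ \textbf{W} \to \Bbbk$ with $[w,n]\mapsto \frac{1}{\ell(w)!}$ for $[w,n] \in \mathbb{W}$ is an algebra morphism.
   Context: Let $\Bbbk$ be a field. A word is a finite sequence of positive integers; $\ell(w)$ is its length. Let $\textsf{Shuffle}$ be the $\Bbbk$-vector space with basis all words. For a word $w=w_1\cdots w_m$ with $\max(w)\le n\in\mathbb{N}$, let $[w,n]$ be the linear endomorphism of $\textsf{Shuffle}$ sending a word $v$ of length $n$ to $v_{w_1}\cdots v_{w_m}$ and all other words to $0$; $\mathbb{W}$ is the set of all such $[w,n]$ and $\textbf{W}$ their span (they form a basis). $\textbf{W}$ is an algebra with product $\nabla_{\sqcup\!\sqcup}([v,m]\otimes[w,n]) = [v\sqcup\!\sqcup (w\uparrow m), m+n]$, where $\sqcup\!\sqcup$ is the shuffle product of words and $w\uparrow m$ adds $m$ to each letter of $w$, and unit $[\emptyset,0]$. *)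

(* Defs.v *)
(* The algebra W is modelled as the free F-module
   {malg F[Wbasis]} (finitely supported functions Wbasis -> F, from
   multinomials' monalg) on the basis W = { [w,n] }. *)
From HB Require Import structures.
From mathcomp Require Import all_boot all_order all_algebra.
From mathcomp Require Import finmap.
From mathcomp Require Import monalg.

Set Implicit Arguments.
Unset Strict Implicit.
Unset Printing Implicit Defensive.

Import GRing.Theory.
Local Open Scope ring_scope.

Definition is_Wbasis (p : seq nat * nat) : bool :=
  all (fun a => (0 < a) && (a <= p.2))%N p.1.

Definition Wbasis := {p : seq nat * nat | is_Wbasis p}.

Definition Wword (b : Wbasis) : seq nat := (val b).1.
Definition Wn (b : Wbasis) : nat := (val b).2.

(* Shuffle product of words, as the list (multiset) of all interleavings,
   counted with multiplicity. *)
Fixpoint shuffle (u v : seq nat) {struct u} : seq (seq nat) :=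
  match u with
  | [::] => [:: v]
  | a :: u' =>
      let fix sh (v : seq nat) : seq (seq nat) :=
        match v with
        | [::] => [:: u]
        | b :: v' => [seq a :: w | w <- shuffle u' v] ++ [seq b :: w | w <- sh v']
        end
      in sh v
  end.

Definition shiftw (w : seq nat) (m : nat) : seq nat := [seq (a + m)%N | a <- w].

Section WAlg.
Variable F : fieldType.

Definition WT := {malg F[Wbasis]}.

(* The basis vector [w,n] (0 if the pair is not a valid basis index; this
   never happens below). *)
Definition Wbase (p : seq nat * nat) : WT :=
  if insub p is Some b then << (b : Wbasis) >> else 0.

Definition Wone : WT := Wbase ([::], 0%N).

Definition Wmul_basis (b1 b2 : Wbasis) : WT :=
  \sum_(s <- shuffle (Wword b1) (shiftw (Wword b2) (Wn b1)))
     Wbase (s, (Wn b1 + Wn b2)%N).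

Definition Wmul (x y : WT) : WT :=
  \sum_(b1 <- msupp x) \sum_(b2 <- msupp y)
     ((x@_b1 * y@_b2) *: Wmul_basis b1 b2).

Definition phi (x : WT) : F :=
  \sum_(b <- msupp x) x@_b / ((size (Wword b))`!)%:R.

End WAlg.

(* Main.v *)
Require Import Defs.
From HB Require Import structures.
From mathcomp Require Import all_boot all_order all_algebra.
From mathcomp Require Import finmap.
From mathcomp Require Import monalg.
From mathcomp Require Import ring.

Local Open Scope ring_scope.
Import GRing.Theory.

Lemma shuffle_cons (a b : nat) u v : shuffle (a::u) (b::v) =
  [seq a :: w | w <- shuffle u (b::v)] ++ [seq b :: w | w <- shuffle (a::u) v].
Proof. by []. Qed.

Lemma shuffle_nil_r (a : nat) u : shuffle (a::u) [::] = [:: a :: u].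
Proof. by []. Qed.

Lemma shuffle_prop (P : pred nat) u v s : all P u -> all P v ->
  s \in shuffle u v -> (size s = size u + size v)%N /\ all P s.
Proof.
elim: u v s => [|a u IHu] v s.
  by move=> _ Pv; rewrite inE => /eqP ->.
elim: v s => [|b v IHv] s.
  by move=> Pu _; rewrite shuffle_nil_r inE => /eqP ->; rewrite addn0.
move=> Hau Hbv; have /andP[Pa Pu] := Hau; have /andP[Pb Pv] := Hbv.
rewrite shuffle_cons mem_cat.
case/orP => /mapP[w Hw ->].
  have [Hs Pw] := IHu _ _ Pu Hbv Hw.
  by split; rewrite /= ?Hs ?Pa ?Pw.
have [Hs Pw] := IHv _ Hau Pv Hw.
by split; rewrite /= ?Hs ?Pb ?Pw ?addnS.
Qed.

Lemma size_shuffle u v : size (shuffle u v) = 'C(size u + size v, size u).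
Proof.
elim: u v => [|a u IHu] v; first by rewrite bin0.
elim: v => [|b v IHv]; first by rewrite shuffle_nil_r addn0 binn.
rewrite shuffle_cons size_cat !size_map IHu IHv /=.
by rewrite !addSn !addnS (binS (size u + size v).+1) addnC.
Qed.

Lemma sum_const_seq (V : nmodType) (T : Type) (r : seq T) (c : V) :
  \sum_(i <- r) c = c *+ size r.
Proof. by elim: r => [|x r IH]; rewrite ?big_nil ?big_cons ?IH ?mulrS. Qed.

Section Proof.
Variable F : fieldType.
Hypothesis char0 : [pchar F] =i pred0.

Definition hh (b : Wbasis) : F := ((size (Wword b))`!)%:R^-1.

Lemma phiE (x : WT F) : phi x = mmap (@idfun F) hh x.
Proof. by []. Qed.

Lemma phiD (x y : WT F) : phi (x + y) = phi x + phi y.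
Proof. by rewrite !phiE raddfD. Qed.

Lemma phi_sum (I : Type) (r : seq I) (G : I -> WT F) :
  phi (\sum_(i <- r) G i) = \sum_(i <- r) phi (G i).
Proof. by rewrite phiE raddf_sum. Qed.

Lemma phiZ c (x : WT F) : phi (c *: x) = c * phi x.
Proof.
rewrite !phiE (mmapEw (msuppZ_le c x)) mmapE big_distrr /=.
by apply: eq_bigr => k _; rewrite mcoeffZ mulrA.
Qed.

Lemma phiU (b : Wbasis) : phi << b >> = hh b.
Proof. by rewrite phiE mmapU /= mul1r. Qed.

Lemma phi_base (s : seq nat) N : is_Wbasis (s, N) ->
  phi (Wbase F (s, N)) = ((size s)`!)%:R^-1.
Proof. by move=> H; rewrite /Wbase insubT phiU. Qed.

Lemma fact_neq0 n : (n`!)%:R != 0 :> F.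
Proof. by rewrite (pcharf0P F).1 // -lt0n fact_gt0. Qed.

Lemma phi_mul_basis b1 b2 : phi (Wmul_basis F b1 b2) = hh b1 * hh b2.
Proof.
rewrite /Wmul_basis phi_sum.
set u := Wword b1; set v := shiftw (Wword b2) (Wn b1).
pose P := fun a : nat => ((0 < a) && (a <= Wn b1 + Wn b2))%N.
have Pu : all P u.
  have := valP b1; rewrite /is_Wbasis /u /Wword; apply: sub_all => a /andP[H0 H].
  by rewrite /P H0 (leq_trans H) // leq_addr.
have Pv : all P v.
  have := valP b2; rewrite /is_Wbasis /v /Wword /shiftw all_map.
  apply: sub_all => a /andP[H1 H2]; rewrite /P /= addn_gt0 H1 /=.
  by rewrite addnC leq_add2l.
rewrite (eq_big_seq (fun _ => ((size u + size v)`!)%:R^-1)); last first.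
  move=> s Hs; have [Hsz Ps] := @shuffle_prop P _ _ _ Pu Pv Hs.
  by rewrite phi_base ?Hsz.
rewrite sum_const_seq size_shuffle /hh.
have Hv : size v = size (Wword b2) by rewrite size_map.
rewrite Hv -/u.
have := bin_fact (leq_addr (size (Wword b2)) (size u)).
rewrite addKn => Hb.
have Hf := fact_neq0 (size u + size (Wword b2)).
rewrite -Hb !natrM in Hf *.
rewrite -mulr_natr.
have H1 := fact_neq0 (size u); have H2 := fact_neq0 (size (Wword b2)).
have HC : 'C(size u + size (Wword b2), size u)%:R != 0 :> F.
  by move: Hf; rewrite !mulf_eq0 !negb_or => /andP[].
by field; rewrite HC H1 H2.
Qed.

Lemma phi_def (x : WT F) : phi x = \sum_(b <- msupp x) x@_b * hh b.
Proof. by []. Qed.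

End Proof.

Theorem corollary3p6 (F : fieldType) (char0 : [pchar F] =i pred0) :
  phi (Wone F) = 1 /\
  (forall x y : WT F, phi (Wmul x y) = phi x * phi y).
Proof.
split.
  by rewrite /Wone phi_base // invr1.
move=> x y; rewrite /Wmul phi_sum !phi_def big_distrl /=.
apply: eq_bigr => b1 _; rewrite phi_sum big_distrr /=.
apply: eq_bigr => b2 _; rewrite phiZ phi_mul_basis //.
by rewrite mulrACA.
Qed.
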